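(* Let $R\subseteq\mathbb{R}^2$ be open and let $f:R\to\mathbb{R}^2$ be $C^1$. Let $V$ be a connected component of $\mathbb{R}^2\setminus(f(S)\cup C(f))$ and let $N_0=\mathrm{Val}(f,V)$. Let $w_0\in\partial V\setminus\overline{f(S)}$. Then $\mathrm{Val}(f,w_0)\le N_0$.
   Context: Write $f=(u,v)$; $J_f=u_xv_y-u_yv_x$ and $S=\{z\in R: J_f(z)=0\}$. $C(f)$ is the set of finite points $\zeta\in\mathbb{R}^2$ for which there is a sequence $(z_n)\subset R$ converging to a point of $\partial R$ or with $|z_n|\to\infty$, such that $f(z_n)\to\zeta$. $\mathrm{Val}(f,w)$ is the number (possibly infinite) of distinct $z\in R$ with $f(z)=w$, and for a set $V$, $\mathrm{Val}(f,V)=\sup_{w\in V}\mathrm{Val}(f,w)$. *)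

(* Defs.v *)
From HB Require Import structures.
From mathcomp Require Import all_boot all_order all_algebra.
From mathcomp Require Import all_classical all_reals all_analysis.
Set Implicit Arguments. Unset Strict Implicit. Unset Printing Implicit Defensive.
Import Order.TTheory GRing.Theory Num.Theory.
Import numFieldNormedType.Exports.
Local Open Scope classical_set_scope.
Local Open Scope ring_scope.

Section Defs.
Variable R : realType.
Local Notation P := (R * R)%type.

Definition ex : P := (1, 0).
Definition ey : P := (0, 1).

Definition u_ (f : P -> P) := fun z => (f z).1.
Definition v_ (f : P -> P) := fun z => (f z).2.

Definition C1_on (D : set P) (f : P -> P) :=
  forall z, D z ->
    [/\ derivable (u_ f) z ex, derivable (u_ f) z ey,
        derivable (v_ f) z ex, derivable (v_ f) z ey
      & [/\ {for z, continuous (fun w => derive (u_ f) w ex)},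
            {for z, continuous (fun w => derive (u_ f) w ey)},
            {for z, continuous (fun w => derive (v_ f) w ex)} &
            {for z, continuous (fun w => derive (v_ f) w ey)}]].

Definition jac (f : P -> P) (z : P) : R :=
  derive (u_ f) z ex * derive (v_ f) z ey - derive (u_ f) z ey * derive (v_ f) z ex.

Definition crit (D : set P) (f : P -> P) : set P := [set z | D z /\ jac f z = 0].

Definition bdry (A : set P) : set P := closure A `\` interior A.

Definition clusterC (D : set P) (f : P -> P) : set P :=
  [set zeta | exists zn : nat -> P,
     (forall n, D (zn n)) /\
     ((exists p, bdry D p /\ zn @ \oo --> p) \/
      ((fun n => `|zn n|) @ \oo --> +oo)) /\
     (f \o zn) @ \oo --> zeta].

(* Val(f,w): number (in N u {+oo}) of distinct z in D with f z = w,
   defined as the supremum of the sizes of finite duplicate-free lists of such z *)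
Definition Val (D : set P) (f : P -> P) (w : P) : \bar R :=
  ereal_sup [set ((size s)%:R)%:E | s in
     [set s : seq P | uniq s /\ (forall z, z \in s -> D z /\ f z = w)]].

Definition ValS (D : set P) (f : P -> P) (V : set P) : \bar R :=
  ereal_sup [set Val D f w | w in V].

End Defs.

(* Main.v *)
Require Import Defs.
From HB Require Import structures.
From mathcomp Require Import all_boot all_order all_algebra.
From mathcomp Require Import all_classical all_reals all_analysis.
From mathcomp Require Import ring lra.
Import Order.TTheory GRing.Theory Num.Theory.
Import numFieldNormedType.Exports.
Local Open Scope classical_set_scope.
Local Open Scope ring_scope.

HB.saturate prod.
Section RRcomplete.
Context {R : realType}.
Lemma RR_complete (F : set_system (R * R)) : ProperFilter F -> cauchy F -> [cvg F in (R * R)%type].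
Proof.
move=> FF Fc; have Fb := (cauchy_ballP F).2 Fc; have {}Fb := Fb FF.
have c1 : cauchy (fst @ F).
  apply/cauchy_ballP => e e0; rewrite near_map2; move: (Fb e e0).
  by apply: filterS => -[[x1 x2] [y1 y2]] [].
have c2 : cauchy (snd @ F).
  apply/cauchy_ballP => e e0; rewrite near_map2; move: (Fb e e0).
  by apply: filterS => -[[x1 x2] [y1 y2]] [].
have h1 : cvg (fst @ F) by apply: cauchy_cvg.
have h2 : cvg (snd @ F) by apply: cauchy_cvg.
apply: (@cvgP (R * R)%type F (lim (fst @ F), lim (snd @ F))) => A nA.
have := cvg_pair h1 h2 (t := A).
move=> H; have H2 := H _ _ _ nA.
have H3 := H2 FF (nbhs_filter _) (nbhs_filter _).
have H4 : F [set x | A (x.1, x.2)] := H3.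
move: H4; apply: filterS; by move=> [a b].
Qed.
HB.instance Definition _ := Uniform_isComplete.Build (R * R)%type RR_complete.
End RRcomplete.
HB.saturate prod.
Section Main.
Variable R : realType.
Local Notation P := (R * R)%type.

Lemma between_lt (x y t p d : R) : `|x - p| < d -> `|y - p| < d ->
  Num.min x y <= t -> t <= Num.max x y -> `|t - p| < d.
Proof.
rewrite !ltr_norml => /andP[h1 h2] /andP[h3 h4].
by case: (leP x y) => h h5 h6; apply/andP; split; lra.
Qed.
Arguments between_lt {x y t p d}.

Lemma mvt1 (g dg : R -> R) (x y c e : R) :
  (forall t, Num.min x y <= t -> t <= Num.max x y -> is_derive t 1 g (dg t)) ->
  (forall t, Num.min x y <= t -> t <= Num.max x y -> `|dg t - c| <= e) ->
  `|g y - g x - c * (y - x)| <= e * `|y - x|.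
Proof.
wlog xy : x y / x <= y.
  move=> W Hd Hb; case: (leP x y) => [xy|yx]; first exact: W.
  have := W y x (ltW yx); rewrite minC maxC => /(_ Hd Hb) H.
  have E : g y - g x - c * (y - x) = - (g x - g y - c * (x - y)) by ring.
  by rewrite E normrN [`|y - x|]distrC.
move=> Hd Hb; rewrite (min_l xy) (max_r xy) in Hd Hb.
have cont : {within `[x, y], continuous g}.
  apply: derivable_within_continuous => t; rewrite in_itv /= => /andP[t1 t2].
  exact: (@ex_derive _ _ _ _ _ _ _ (Hd t t1 t2)).
have Hd' : forall t, t \in `]x, y[ -> is_derive t 1 g (dg t).
  by move=> t; rewrite in_itv /= => /andP[t1 t2]; apply: Hd; apply: ltW.
have [t tI ->] := MVT_segment xy Hd' cont.
move: tI; rewrite in_itv /= => /andP[t1 t2].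
rewrite -mulrBl normrM (ger0_norm (x := y - x)) ?subr_ge0 //.
by rewrite ler_wpM2r ?subr_ge0 // Hb.
Qed.

Lemma line_x (u : P -> R) (z : P) : derivable u z (ex R) ->
  is_derive z.1 1 (fun t => u (t, z.2)) (derive u z (ex R)).
Proof.
move=> du.
have E : (fun h : R => h^-1 *: (((fun t => u (t, z.2)) \o shift z.1) (h *: 1) - u (z.1, z.2)))
   = (fun h : R => h^-1 *: ((u \o shift z) (h *: ex R) - u z)).
  apply/funext => h /=. rewrite /ex. case: z {du} => z1 z2 /=.
  congr (_ *: (u _ - _)); apply: injective_projections => //=.
  by rewrite scaler0 add0r.
have dg : derivable (fun t => u (t, z.2)) z.1 1 by rewrite /derivable E.
have := derivableP dg; rewrite /derive E //.
Qed.

Lemma line_y (u : P -> R) (z : P) : derivable u z (ey R) ->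
  is_derive z.2 1 (fun t => u (z.1, t)) (derive u z (ey R)).
Proof.
move=> du.
have E : (fun h : R => h^-1 *: (((fun t => u (z.1, t)) \o shift z.2) (h *: 1) - u (z.1, z.2)))
   = (fun h : R => h^-1 *: ((u \o shift z) (h *: ey R) - u z)).
  apply/funext => h /=; rewrite /ey; case: z {du} => z1 z2 /=.
  congr (_ *: (u _ - _)); apply: injective_projections => //=.
  by rewrite scaler0 add0r.
have dg : derivable (fun t => u (z.1, t)) z.2 1 by rewrite /derivable E.
have := derivableP dg; rewrite /derive E //.
Qed.

Lemma normP_lt (p : P) (d : R) : `|p| < d <-> `|p.1| < d /\ `|p.2| < d.
Proof. by rewrite prod_normE gt_max; split => [/andP[]|[-> ->]]. Qed.

Lemma normP_le (p : P) (d : R) : `|p| <= d <-> `|p.1| <= d /\ `|p.2| <= d.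
Proof. by rewrite prod_normE ge_max; split => [/andP[]|[-> ->]]. Qed.

Lemma incr (D : set P) (u : P -> R) (z0 : P) (e : R) : open D -> D z0 -> 0 < e ->
 (forall z, D z -> derivable u z (ex R) /\ derivable u z (ey R)) ->
 {for z0, continuous (fun w => derive u w (ex R))} ->
 {for z0, continuous (fun w => derive u w (ey R))} ->
 exists2 d, 0 < d & (forall a, `|a - z0| < d -> D a) /\
   forall a b, `|a - z0| < d -> `|b - z0| < d ->
   `|u b - u a - (derive u z0 (ex R) * (b.1 - a.1) + derive u z0 (ey R) * (b.2 - a.2))|
     <= e * (`|b.1 - a.1| + `|b.2 - a.2|).
Proof.
move=> oD Dz0 e0 dD cx cy.
have N : \forall w \near z0, D w /\ `|derive u z0 (ex R) - derive u w (ex R)| < e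
     /\ `|derive u z0 (ey R) - derive u w (ey R)| < e.
  move/cvgrPdist_lt: cx => /(_ e e0) cx.
  move/cvgrPdist_lt: cy => /(_ e e0) cy.
  have oD' : \forall w \near z0, D w by apply: open_nbhs_nbhs.
  apply: (@filterS _ (nbhs z0) _ _ _ _ (filterI oD' (filterI cx cy))).
  move=> w [h1 [h2 h3]]; split; [exact: h1|split; [exact: h2|exact: h3]].
have [d d0 Hd] := (nbhs_ballP _ _).1 N.
have B : forall a, `|a - z0| < d -> ball z0 d a.
  by move=> a; rewrite -ball_normE /= distrC.
exists d => //; split.
  by move=> a /B /Hd [].
set cx' := derive u z0 (ex R); set cy' := derive u z0 (ey R).
have inb : forall t s, `|t - z0.1| < d -> `|s - z0.2| < d ->
    [/\ D (t, s), `|derive u (t, s) (ex R) - cx'| <= e & `|derive u (t, s) (ey R) - cy'| <= e].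
  move=> t s ht hs; have /B /Hd [h1 [h2 h3]] : `|(t, s) - z0| < d by apply/normP_lt.
  split; [exact: h1|apply: ltW; rewrite distrC; exact: h2|apply: ltW; rewrite distrC; exact: h3].
move=> [a1 a2] [b1 b2] /normP_lt [/= ha1 ha2] /normP_lt [/= hb1 hb2] /=.
have HA : `|u (b1, b2) - u (a1, b2) - cx' * (b1 - a1)| <= e * `|b1 - a1|.
  apply: (@mvt1 (fun t => u (t, b2)) (fun t => derive u (t, b2) (ex R))).
  - move=> t t1 t2; have [Dt _ _] := inb t b2 (between_lt ha1 hb1 t1 t2) hb2.
    exact: (@line_x u (t, b2) (dD _ Dt).1).
  - move=> t t1 t2; by have [_ ? _] := inb t b2 (between_lt ha1 hb1 t1 t2) hb2.
have HB : `|u (a1, b2) - u (a1, a2) - cy' * (b2 - a2)| <= e * `|b2 - a2|.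
  apply: (@mvt1 (fun t => u (a1, t)) (fun t => derive u (a1, t) (ey R))).
  - move=> t t1 t2; have [Dt _ _] := inb a1 t ha1 (between_lt ha2 hb2 t1 t2).
    exact: (@line_y u (a1, t) (dD _ Dt).2).
  - move=> t t1 t2; by have [_ _ ?] := inb a1 t ha1 (between_lt ha2 hb2 t1 t2).
have E : u (b1, b2) - u (a1, a2) - (cx' * (b1 - a1) + cy' * (b2 - a2)) =
  (u (b1, b2) - u (a1, b2) - cx' * (b1 - a1)) + (u (a1, b2) - u (a1, a2) - cy' * (b2 - a2)) by ring.
rewrite E [e * (_ + _)]mulrDr; apply: le_trans (ler_normD _ _) _; exact: lerD HA HB.
Qed.

Lemma aux4 (x y z w : R) : `|w| + `|y| <= `|x| + `|y| + `|z| + `|w|.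
Proof. have := normr_ge0 x; have := normr_ge0 z; lra. Qed.

Lemma aux4' (x y z w : R) : `|x| + `|z| <= `|x| + `|y| + `|z| + `|w|.
Proof. have := normr_ge0 y; have := normr_ge0 w; lra. Qed.

Lemma auxC (j K n N : R) : 0 < j -> 0 <= K -> 0 <= n -> N <= 2 * (j / (4 * K + 4)) * n ->
  j^-1 * K * N <= 2^-1 * n.
Proof.
move=> j0 K0 n0 hN.
apply: le_trans (ler_wpM2l _ hN) _; first by apply: mulr_ge0 => //; rewrite invr_ge0 ltW.
have -> : j^-1 * K * (2 * (j / (4 * K + 4)) * n) = (K / (2 * K + 2)) * n.
  by field; apply/andP; split; rewrite ?gt_eqF //; lra.
apply: ler_wpM2r => //; rewrite ler_pdivrMr; lra.
Qed.

Lemma auxD (j K rho x : R) : 0 < j -> 0 <= K -> 0 <= rho -> x <= rho * j / (2 * K + 2) ->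
  j^-1 * K * x <= 2^-1 * rho.
Proof.
move=> j0 K0 r0 hx.
apply: le_trans (ler_wpM2l _ hx) _; first by apply: mulr_ge0 => //; rewrite invr_ge0 ltW.
have -> : j^-1 * K * (rho * j / (2 * K + 2)) = rho * (K / (2 * K + 2)).
  by field; apply/andP; split; rewrite ?gt_eqF //; lra.
rewrite [2^-1 * _]mulrC; apply: ler_wpM2l => //; rewrite ler_pdivrMr; lra.
Qed.

Lemma Ainv0 (a b c d q1 q2 : R) : a * d - b * c != 0 ->
  (a * d - b * c)^-1 * (d * q1 - b * q2) = 0 -> (a * d - b * c)^-1 * (a * q2 - c * q1) = 0 ->
  q1 = 0 /\ q2 = 0.
Proof.
move=> J0 /eqP; rewrite mulf_eq0 invr_eq0 (negbTE J0) /= => /eqP h1.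
move/eqP; rewrite mulf_eq0 invr_eq0 (negbTE J0) /= => /eqP h2.
have e1 : (a * d - b * c) * q1 = a * (d * q1 - b * q2) + b * (a * q2 - c * q1) by ring.
have e2 : (a * d - b * c) * q2 = d * (a * q2 - c * q1) + c * (d * q1 - b * q2) by ring.
rewrite h1 h2 !mulr0 addr0 in e1 e2.
move/eqP: e1; rewrite mulf_eq0 (negbTE J0) /= => /eqP ->.
by move/eqP: e2; rewrite mulf_eq0 (negbTE J0) /= => /eqP ->.
Qed.

Lemma loc_surj (D : set P) (f : P -> P) (z0 : P) (e : R) : open D -> C1_on D f -> D z0 ->
  jac f z0 != 0 -> 0 < e ->
  exists2 r, 0 < r & forall y, `|y - f z0| < r -> exists z, [/\ `|z - z0| < e, D z & f z = y].
Proof.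
move=> oD C1 Dz0 J0 e0.
have := C1 z0 Dz0 => -[_ _ _ _ [cux cuy cvx cvy]].
set a := derive (u_ f) z0 (ex R); set b := derive (u_ f) z0 (ey R).
set c := derive (v_ f) z0 (ex R); set d := derive (v_ f) z0 (ey R).
have JE : jac f z0 = a * d - b * c by [].
set J := jac f z0 in J0 JE.
set K := `|a| + `|b| + `|c| + `|d|.
have K0 : 0 <= K by rewrite /K; apply: addr_ge0 => //; apply: addr_ge0 => //; apply: addr_ge0.
have nJ0 : 0 < `|J| by rewrite normr_gt0.
set eps := `|J| / (4 * K + 4).
have eps0 : 0 < eps by apply: divr_gt0 => //; lra.
have [d1 d10 [D1 H1]] := @incr D (u_ f) z0 eps oD Dz0 eps0
  (fun z Dz => let: And5 h1 h2 _ _ _ := C1 z Dz in conj h1 h2) cux cuy.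
have [d2 d20 [D2 H2]] := @incr D (v_ f) z0 eps oD Dz0 eps0
  (fun z Dz => let: And5 _ _ h1 h2 _ := C1 z Dz in conj h1 h2) cvx cvy.
set rho := Num.min (Num.min d1 d2 / 2) (e / 2).
have m1 : Num.min d1 d2 <= d1 by rewrite ge_min lexx.
have m2 : Num.min d1 d2 <= d2 by rewrite ge_min lexx orbT.
have mpos : 0 < Num.min d1 d2 by rewrite lt_min d10 d20.
have r1 : rho <= Num.min d1 d2 / 2 by rewrite /rho ge_min lexx.
have r2 : rho <= e / 2 by rewrite /rho ge_min lexx orbT.
have rho0 : 0 < rho by rewrite /rho lt_min; apply/andP; split; lra.
have rd1 : rho < d1 by lra.
have rd2 : rho < d2 by lra.
have re : rho < e by lra.
pose Ainv (q : P) : P := (J^-1 * (d * q.1 - b * q.2), J^-1 * (a * q.2 - c * q.1)).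
have Abnd : forall q, `|Ainv q| <= `|J|^-1 * K * `|q|.
  move=> q; have /normP_le [q1 q2] : `|q| <= `|q| by [].
  have hq := normr_ge0 q.
  have ha := mulr_ge0 (normr_ge0 a) hq; have hc := mulr_ge0 (normr_ge0 c) hq.
  have hb := mulr_ge0 (normr_ge0 b) hq; have hd := mulr_ge0 (normr_ge0 d) hq.
  have e1 := ler_wpM2l (normr_ge0 d) q1; have e2 := ler_wpM2l (normr_ge0 b) q2.
  have e3 := ler_wpM2l (normr_ge0 a) q2; have e4 := ler_wpM2l (normr_ge0 c) q1.
  apply/normP_le; rewrite /Ainv /=; split; rewrite normrM normfV -mulrA ler_wpM2l ?invr_ge0 //.
    apply: le_trans (ler_normB _ _) _; rewrite !normrM.
    apply: le_trans (lerD e1 e2) _; rewrite -mulrDl; apply: ler_wpM2r => //.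
    rewrite /K; exact: aux4.
  apply: le_trans (ler_normB _ _) _; rewrite !normrM.
  apply: le_trans (lerD e3 e4) _; rewrite -mulrDl; apply: ler_wpM2r => //.
  rewrite /K; exact: aux4'.
set r := rho * `|J| / (2 * K + 2).
have r0 : 0 < r by rewrite /r; apply: divr_gt0; [exact: mulr_gt0|lra].
exists r => // y hy.
pose g (z : P) : P := z - Ainv (f z - y).
have Lip : forall p q, `|p - z0| <= rho -> `|q - z0| <= rho -> `|g p - g q| <= 2^-1 * `|p - q|.
  move=> p q hp hq.
  have hp1 : `|p - z0| < d1 by exact: le_lt_trans hp rd1.
  have hp2 : `|p - z0| < d2 by exact: le_lt_trans hp rd2.
  have hq1 : `|q - z0| < d1 by exact: le_lt_trans hq rd1.
  have hq2 : `|q - z0| < d2 by exact: le_lt_trans hq rd2.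
  have Hu := H1 q p hq1 hp1; have Hv := H2 q p hq2 hp2.
  rewrite /u_ /v_ -/a -/b -/c -/d in Hu Hv.
  set D1' := (f p).1 - (f q).1 - (a * (p.1 - q.1) + b * (p.2 - q.2)) in Hu.
  set D2' := (f p).2 - (f q).2 - (c * (p.1 - q.1) + d * (p.2 - q.2)) in Hv.
  have E : g p - g q = - Ainv (D1', D2').
    rewrite /g /Ainv /D1' /D2'; apply: injective_projections => /=; rewrite JE; field;
    by rewrite -JE.
  rewrite E normrN; apply: le_trans (Abnd _) _; apply: auxC => //.
  have /normP_le [n1 n2] : `|p - q| <= `|p - q| by [].
  have E2 : 2 * (`|J| / (4 * K + 4)) * `|p - q| = eps * (`|p - q| + `|p - q|) by rewrite /eps; ring.
  apply/normP_le; split => /=.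
    apply: le_trans Hu _; rewrite E2; apply: ler_wpM2l; [exact: ltW eps0|apply: lerD; [exact: n1|exact: n2]].
  apply: le_trans Hv _; rewrite E2; apply: ler_wpM2l; [exact: ltW eps0|apply: lerD; [exact: n1|exact: n2]].
have Inv : forall w, `|w - z0| <= rho -> `|g w - z0| <= rho.
  move=> w hw.
  have E : g w - z0 = (g w - g z0) + - Ainv (f z0 - y).
    by rewrite opprB addrA addrAC addrK.
  rewrite E; apply: le_trans (ler_normD _ _) _.
  have h0 : `|z0 - z0| <= rho by rewrite subrr normr0 ltW.
  have h1 := Lip w z0 hw h0.
  have h2 : `|- Ainv (f z0 - y)| <= 2^-1 * rho.
    rewrite normrN; apply: le_trans (Abnd _) _; apply: auxD => //; first exact: ltW.
    by rewrite distrC; apply: ltW.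
  have h3 : `|g w - g z0| <= 2^-1 * rho.
    by apply: le_trans h1 _; apply: ler_wpM2l.
  have := lerD h3 h2; lra.
set U := closed_ball z0 rho.
have UE : forall w, U w <-> `|w - z0| <= rho.
  by move=> w; rewrite /U closed_ballE //= distrC.
have gU : {homo g : w / U w >-> U w}.
  by move=> w /UE hw; apply/UE; exact: Inv.
have [i gi] := Pfun gU.
have ctr : is_contraction i.
  exists (2^-1)%:nng; split => /=; first lra.
  move=> [p q] [/= /UE Up /UE Uq]; rewrite -gi; exact: Lip.
have Un0 : U !=set0 by exists z0; apply/UE; rewrite subrr normr0 ltW.
have [p Up pE] := banach_fixed_point ctr (@closed_ball_closed _ _ z0 rho) Un0.
rewrite -gi in pE.
have X0 : Ainv (f p - y) = 0.
  have : p - g p = Ainv (f p - y) by rewrite /g opprB addrC subrK.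
  by rewrite -pE subrr.
move: X0; rewrite /Ainv => -[] /=; rewrite JE => q1 q2.
have J0' : a * d - b * c != 0 by rewrite -JE.
have [e1 e2] := Ainv0 _ _ _ _ _ _ J0' q1 q2.
exists p; move/UE: Up => Up; split.
- exact: le_lt_trans Up re.
- exact: D1 (le_lt_trans Up rd1).
- apply/eqP; rewrite -subr_eq0; apply/eqP.
  by apply: injective_projections => /=; [exact: e1|exact: e2].
Qed.

Arguments loc_surj {D f z0 e}.

Lemma sep (s : seq P) (z : P) : z \notin s ->
  exists2 eta, 0 < eta & forall x, x \in s -> eta <= `|x - z|.
Proof.
elim: s => [|x s IH]; first by move=> _; exists 1.
rewrite in_cons negb_or => /andP[zx zs]; have [eta e0 H] := IH zs.
exists (Num.min eta `|x - z|).
  by rewrite lt_min e0 normr_gt0 subr_eq0 eq_sym.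
move=> y; rewrite in_cons => /orP[/eqP->|ys]; first by rewrite ge_min lexx orbT.
by rewrite ge_min H.
Qed.

Arguments sep {s z}.

Lemma all2_mem (r : P -> P -> bool) s' s y : all2 r s' s -> y \in s' ->
  exists2 x, x \in s & r y x.
Proof.
elim: s' s => [|x' s' IH] [|x s] //= /andP[h1 h2]; rewrite in_cons => /orP[/eqP->|ys].
  by exists x; rewrite ?mem_head.
by have [x0 x0s hx0] := IH s h2 ys; exists x0; rewrite ?in_cons ?x0s ?orbT.
Qed.

Arguments all2_mem {r s' s y}.

Lemma all2_weak (e e' : R) s' s : e' <= e -> all2 (fun p q : P => `|p - q| < e') s' s ->
  all2 (fun p q : P => `|p - q| < e) s' s.
Proof.
move=> ee; elim: s' s => [|x' s' IH] [|x s] //= /andP[h1 h2].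
by rewrite (lt_le_trans h1 ee) IH.
Qed.

Arguments all2_weak {e e' s' s}.

Lemma aux_tri (a b c e eta : R) : a <= b + c -> b < e -> c < e -> e <= eta / 2 -> eta <= a -> False.
Proof. move=> *; lra. Qed.

Arguments aux_tri {a b c e eta}.

Lemma lift (D : set P) (f : P -> P) (w0 : P) (s : seq P) : open D -> C1_on D f -> uniq s ->
  (forall z, z \in s -> [/\ D z, f z = w0 & jac f z != 0]) ->
  forall e, 0 < e -> exists2 r, 0 < r & forall w, `|w - w0| < r ->
  exists s', [/\ size s' = size s, uniq s', (forall z, z \in s' -> D z /\ f z = w) &
     all2 (fun p q : P => `|p - q| < e) s' s].
Proof.
move=> oD C1; elim: s => [|z s IH] us Hs e e0.
  by exists 1 => // w _; exists [::]; split.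
move: us => /= /andP[zs us].
have Hs' : forall x, x \in s -> [/\ D x, f x = w0 & jac f x != 0].
  by move=> x xs; apply: Hs; rewrite in_cons xs orbT.
have [eta eta0 Heta] := sep zs.
set e' := Num.min e (eta / 2).
have e'0 : 0 < e' by rewrite lt_min e0 /=; apply: divr_gt0.
have e'1 : e' <= e by rewrite ge_min lexx.
have e'2 : e' <= eta / 2 by rewrite ge_min lexx orbT.
have [r1 r10 Hr1] := IH us Hs' e' e'0.
have [Dz fz Jz] := Hs z (mem_head _ _).
have [r2 r20 Hr2] := loc_surj oD C1 Dz Jz e'0.
rewrite fz in Hr2.
exists (Num.min r1 r2); first by rewrite lt_min r10 r20.
move=> w; rewrite lt_min => /andP[hw1 hw2].
have [s' [ss us' Ps' A]] := Hr1 w hw1.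
have [z'' [hz Dz'' fz'']] := Hr2 w hw2.
exists (z'' :: s'); split.
- by rewrite /= ss.
- rewrite /= us' andbT; apply/negP => /(all2_mem A) [x xs hx].
  have hx' : `|x - z''| < e' by rewrite distrC.
  exact: (aux_tri (ler_distD z'' x z) hx' hz e'2 (Heta x xs)).
- by move=> x; rewrite in_cons => /orP[/eqP->|]; [split|exact: Ps'].
- by rewrite /= (lt_le_trans hz e'1) (all2_weak e'1 A).
Qed.
End Main.

Theorem theorem3p7 (R : realType) (D : set (R * R)) (f : R * R -> R * R)
  (V : set (R * R)) (w0 : R * R) :
  open D ->
  C1_on D f ->
  (exists x, (~` (f @` crit D f `|` clusterC D f)) x /\
     V = connected_component (~` (f @` crit D f `|` clusterC D f)) x) ->
  bdry V w0 ->
  ~ closure (f @` crit D f) w0 ->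
  (Val D f w0 <= ValS D f V)%E.
Proof.
move=> oD C1 _ [cV _] nC.
rewrite /Val; apply: ge_ereal_sup => _ [s [us Hs] <-].
have Hs' : forall z, z \in s -> [/\ D z, f z = w0 & jac f z != 0].
  move=> z zs; have [Dz fz] := Hs z zs; split => //; apply/negP => /eqP Jz.
  by apply: nC; apply: subset_closure; exists z.
have [r r0 Hr] := @lift R D f w0 s oD C1 us Hs' 1 ltr01.
have [w [Vw bw]] := cV (ball w0 r) (nbhsx_ballx w0 r r0).
have hw : `|w - w0| < r by move: bw; rewrite -ball_normE /= distrC.
have [s' [ss us' Ps' _]] := Hr w hw.
apply: (@le_trans _ _ (Val D f w)).
  by apply: ereal_sup_ubound; exists s' => //; rewrite ss.
by apply: ereal_sup_ubound; exists w.
Qed.
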